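(* Let $(G,r)$ be a symmetric group with $|G|\ge2$, $(G,+,\cdot)$ its associated left brace, and $\{1\}=K_0\subseteq K_1\subseteq\cdots$ its derived chain of ideals. (1) For all integers $j,s$ with $1\le s\le j$: $((\cdots((K_j*G)*G)*\cdots)*G)\subseteq K_{j-s}$, where $*G$ is applied $s$ times. (2) For an integer $m\ge1$ the following are equivalent: (a) $(G,r)$ has finite multipermutation level $\mathrm{mpl}(G,r)=m$; (b) the derived chain has the form $\{1\}=K_0\subsetneq K_1\subsetneq\cdots\subsetneq K_{m-1}\subsetneq K_m=G$; (c) $G^{(j+1)}\subseteq K_{m-j}$ for $0\le j\le m$, and $G^{(j+1)}\not\subseteq K_{m-j-1}$ for $0\le j\le m-1$; (d) $G^{(m+1)}=0$ and $G^{(m)}\neq0$ (i.e. the brace is right nilpotent of class $m+1$).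
   Context: A symmetric group is a pair $(G,r)$, $G$ a group, $r(u,v)=({}^uv,u^v)$ an involutive bijection of $G\times G$ with ${}^a1=1,{}^1u=u,1^u=1,a^1=a$, ${}^{ab}u={}^a({}^bu)$, $a^{uv}=(a^u)^v$, ${}^a(uv)=({}^au)({}^{a^u}v)$, $(ab)^u=(a^{{}^bu})(b^u)$, $uv=({}^uv)(u^v)$; it is a non-degenerate symmetric set. Its associated left brace is $(G,+,\cdot)$ with $a+b:=a({}^{a^{-1}}b)$; then ${}^ab=ab-a$ and $0=1$. Define $a*b:=ab-a-b$; for subsets $A,B$, $A*B$ is the additive subgroup generated by $\{a*b:a\in A,b\in B\}$; $G^{(1)}=G$, $G^{(s+1)}=G^{(s)}*G$. An ideal is a normal subgroup $H$ with ${}^aH\subseteq H$ for all $a$; $G/H$ then inherits a symmetric group structure. The socle is $\mathrm{soc}(G)=\{a:{}^au=u\ \forall u\in G\}$, an ideal with $G/\mathrm{soc}(G)\cong\mathrm{Ret}(G,r)$. Put $G^0=G$, $G^j=G^{j-1}/\mathrm{soc}(G^{j-1})$ with canonical maps $\varphi_j:G^{j-1}\to G^j$, $K_0=\{1\}$, $K_1=\mathrm{soc}(G)$, $K_j=(\varphi_{j-1}\circ\cdots\circ\varphi_1)^{-1}(\mathrm{soc}(G^{j-1}))$ for $j>1$ (the derived chain of ideals). The retraction of a non-degenerate symmetric set $(X,r)$ is $X/\!\sim$ ($x\sim y$ iff ${}^xz={}^yz$ for all $z$) with the induced map; $\mathrm{mpl}(X,r)=m$ means $m$ is minimal such that the $m$-fold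 iterated retraction is a one-element set. *)

(* Defs.v *)
From Stdlib Require Import Arith.

(* A symmetric group (G,r), r(u,v) = (lact u v, ract u v) = (^u v, u^v). *)
Record SymGroup := {
  car :> Type;
  mul : car -> car -> car;
  one : car;
  inv : car -> car;
  lact : car -> car -> car;
  ract : car -> car -> car;
  mulA : forall a b c, mul a (mul b c) = mul (mul a b) c;
  mul1g : forall a, mul one a = a;
  mulg1 : forall a, mul a one = a;
  mulVg : forall a, mul (inv a) a = one;
  mulgV : forall a, mul a (inv a) = one;
  r_invol1 : forall u v, lact (lact u v) (ract u v) = u;
  r_invol2 : forall u v, ract (lact u v) (ract u v) = v;
  lact_a1 : forall a, lact a one = one;
  lact_1u : forall u, lact one u = u;
  ract_1u : forall u, ract one u = one;
  ract_a1 : forall a, ract a one = a;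
  lact_mul : forall a b u, lact (mul a b) u = lact a (lact b u);
  ract_mul : forall a u v, ract a (mul u v) = ract (ract a u) v;
  lact_dist : forall a u v, lact a (mul u v) = mul (lact a u) (lact (ract a u) v);
  ract_dist : forall a b u, ract (mul a b) u = mul (ract a (lact b u)) (ract b u);
  mul_r : forall u v, mul u v = mul (lact u v) (ract u v)
}.

Section Brace.
Variable G : SymGroup.

Definition subset (A B : G -> Prop) : Prop := forall x, A x -> B x.
Definition fullset : G -> Prop := fun _ => True.

(* associated left brace: a + b := a (^{a^-1} b); zero is 1 *)
Definition badd (a b : G) : G := mul G a (lact G (inv G a) b).
(* additive inverse: the unique b with a + b = 1 *)
Definition bopp (a : G) : G := lact G a (inv G a).
Definition bsub (a b : G) : G := badd a (bopp b).

Definition bstar (a b : G) : G := bsub (bsub (mul G a b) a) b.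

Inductive addgen (P : G -> Prop) : G -> Prop :=
  | addgen_in : forall x, P x -> addgen P x
  | addgen_0 : addgen P (one G)
  | addgen_add : forall x y, addgen P x -> addgen P y -> addgen P (badd x y)
  | addgen_opp : forall x, addgen P x -> addgen P (bopp x).

Definition setstar (A B : G -> Prop) : G -> Prop :=
  addgen (fun x => exists a b, A a /\ B b /\ x = bstar a b).

(* G^(s): G^(1) = G, G^(s+1) = G^(s) * G  (G^(0) set to G by convention, unused) *)
Fixpoint Gder (s : nat) : G -> Prop :=
  match s with
  | 0 => fullset
  | 1 => fullset
  | S s' => setstar (Gder s') fullset
  end.

(* G^j = G/K_j is represented by the congruence
   Eq_j (x ~ y iff x^{-1} y in K_j); K_{j+1} is the preimage of soc(G^j):
   the classes a acting trivially on G^j, i.e. ^a u ~_j u for all u. *)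
Fixpoint Kchain (j : nat) : G -> Prop :=
  match j with
  | 0 => fun x => x = one G
  | S j' => fun a => forall u, Kchain j' (mul G (inv G (lact G a u)) u)
  end.

(* Iterated retraction of the symmetric set (G,r): Ret^k(G) = G / RetEq k,
   with RetEq 0 = equality and [x] ~ [y] in Ret^{k+1} iff ^x z and ^y z are
   identified in Ret^k for every z. *)
Fixpoint RetEq (k : nat) : G -> G -> Prop :=
  match k with
  | 0 => fun x y => x = y
  | S k' => fun x y => forall z, RetEq k' (lact G x z) (lact G y z)
  end.

Definition RetTrivial (k : nat) : Prop := forall x y : G, RetEq k x y.

Definition mpl_eq (m : nat) : Prop :=
  RetTrivial m /\ (forall k, k < m -> ~ RetTrivial k).

End Brace.

(* Main.v *)
Require Import Defs.
From Stdlib Require Import Arith Classical Lia.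

Local Notation "x ⋅ y" := (mul _ x y) (at level 40, left associativity).
Local Notation "x ⊕ y" := (badd _ x y) (at level 50, left associativity).

Lemma mulKg (G : SymGroup) (a b : G) : inv G a ⋅ (a ⋅ b) = b.
Proof. rewrite mulA, mulVg, mul1g; reflexivity. Qed.
Lemma mulKVg (G : SymGroup) (a b : G) : a ⋅ (inv G a ⋅ b) = b.
Proof. rewrite mulA, mulgV, mul1g; reflexivity. Qed.
Lemma mulgK (G : SymGroup) (a b : G) : b ⋅ a ⋅ inv G a = b.
Proof. rewrite <- mulA, mulgV, mulg1; reflexivity. Qed.
Lemma mulgKV (G : SymGroup) (a b : G) : b ⋅ inv G a ⋅ a = b.
Proof. rewrite <- mulA, mulVg, mulg1; reflexivity. Qed.
Lemma inv_uniq (G : SymGroup) (a b : G) : a ⋅ b = one G -> inv G a = b.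
Proof. intro H. rewrite <- (mulKg G a b), H, mulg1. reflexivity. Qed.
Lemma invK (G : SymGroup) (a : G) : inv G (inv G a) = a.
Proof. apply inv_uniq, mulVg. Qed.
Lemma invM (G : SymGroup) (a b : G) : inv G (a ⋅ b) = inv G b ⋅ inv G a.
Proof. apply inv_uniq. rewrite mulA, mulgK, mulgV. reflexivity. Qed.
Lemma inv1 (G : SymGroup) : inv G (one G) = one G.
Proof. apply inv_uniq, mul1g. Qed.

Lemma lactK (G : SymGroup) (a u : G) : lact G (inv G a) (lact G a u) = u.
Proof. rewrite <- lact_mul, mulVg, lact_1u. reflexivity. Qed.
Lemma lactKV (G : SymGroup) (a u : G) : lact G a (lact G (inv G a) u) = u.
Proof. rewrite <- lact_mul, mulgV, lact_1u. reflexivity. Qed.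
Lemma ract_eq (G : SymGroup) (a x : G) : ract G a x = inv G (lact G a x) ⋅ (a ⋅ x).
Proof. rewrite (mul_r G a x). rewrite mulKg. reflexivity. Qed.
Lemma ract_inv (G : SymGroup) (x y : G) : ract G x y = lact G (inv G (lact G x y)) x.
Proof. rewrite <- (lactK G (lact G x y) (ract G x y)), r_invol1. reflexivity. Qed.

Lemma badd_mul (G : SymGroup) (a b : G) : a ⊕ lact G a b = a ⋅ b.
Proof. unfold badd. rewrite lactK. reflexivity. Qed.

Lemma badd_comm (G : SymGroup) (x s : G) : x ⊕ s = s ⊕ x.
Proof.
  unfold badd. set (y := lact G (inv G x) s).
  assert (hs : lact G x y = s) by apply lactKV.
  rewrite (mul_r G x y), ract_inv, hs. reflexivity.
Qed.

Lemma lact_badd (G : SymGroup) (g x y : G) :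
  lact G g (x ⊕ y) = lact G g x ⊕ lact G g y.
Proof.
  unfold badd. rewrite lact_dist, <- !lact_mul. f_equal. f_equal.
  rewrite ract_eq, mulA, mulgK. reflexivity.
Qed.

Lemma badd_assoc (G : SymGroup) (a b c : G) : a ⊕ (b ⊕ c) = a ⊕ b ⊕ c.
Proof.
  unfold badd at 1. rewrite lact_badd. unfold badd.
  rewrite invM, lact_mul, mulA. reflexivity.
Qed.
Lemma badd_0l (G : SymGroup) (a : G) : one G ⊕ a = a.
Proof. unfold badd. rewrite inv1, lact_1u, mul1g. reflexivity. Qed.
Lemma badd_0r (G : SymGroup) (a : G) : a ⊕ one G = a.
Proof. unfold badd. rewrite lact_a1, mulg1. reflexivity. Qed.
Lemma badd_oppr (G : SymGroup) (a : G) : a ⊕ bopp G a = one G.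
Proof. unfold badd, bopp. rewrite lactK, mulgV. reflexivity. Qed.
Lemma badd_CA (G : SymGroup) (x y z : G) : x ⊕ (y ⊕ z) = y ⊕ (x ⊕ z).
Proof. rewrite !badd_assoc, (badd_comm G x y). reflexivity. Qed.

Lemma bstar_eq (G : SymGroup) (a b : G) : bstar G a b = bsub G (lact G a b) b.
Proof.
  unfold bstar. f_equal. unfold bsub. rewrite <- badd_mul, (badd_comm G a),
    <- badd_assoc, badd_oppr, badd_0r. reflexivity.
Qed.

Lemma key_eq (G : SymGroup) (x p g c : G) :
  x ⊕ p = g ⊕ c -> bsub G x c = bsub G g p.
Proof.
  intro H. unfold bsub.
  rewrite <- (badd_0r G x), <- (badd_oppr G p), badd_assoc, H.
  rewrite <- !badd_assoc, (badd_CA G c), badd_oppr, badd_0r. reflexivity.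
Qed.

Record ideal (G : SymGroup) (K : G -> Prop) := {
  id1 : K (one G);
  idM : forall x y, K x -> K y -> K (x ⋅ y);
  idV : forall x, K x -> K (inv G x);
  idN : forall g x, K x -> K (g ⋅ x ⋅ inv G g);
  idL : forall g x, K x -> K (lact G g x) }.

Lemma idVV (G : SymGroup) K (HK : ideal G K) (x y : G) :
  K (inv G x ⋅ y) -> K (inv G y ⋅ x).
Proof. intro h. apply (idV _ _ HK) in h. rewrite invM, invK in h. exact h. Qed.

Lemma sub_char (G : SymGroup) K (HK : ideal G K) (x y : G) :
  K (bsub G x y) <-> K (inv G y ⋅ x).
Proof.
  assert (E : y ⊕ bsub G x y = x).
  { unfold bsub. rewrite (badd_comm G x), badd_assoc, badd_oppr, badd_0l. reflexivity. }
  assert (E2 : lact G (inv G y) (bsub G x y) = inv G y ⋅ x).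
  { assert (h : inv G y ⋅ (y ⊕ bsub G x y) = lact G (inv G y) (bsub G x y)) by (unfold badd at 1; apply mulKg). rewrite E in h. symmetry; exact h. }
  rewrite <- E2. split; intro h.
  - apply (idL _ _ HK), h.
  - apply (idL _ _ HK) with (g := y) in h. rewrite lactKV in h. exact h.
Qed.

Lemma resp (G : SymGroup) K (HK : ideal G K) (g x y : G) :
  K (inv G x ⋅ y) -> K (inv G (lact G g x) ⋅ lact G g y).
Proof.
  intro h. rewrite <- (mulKVg G x y), lact_dist, mulKg.
  apply (idL _ _ HK), h.
Qed.

Definition nextK (G : SymGroup) (K : G -> Prop) (a : G) : Prop :=
  forall u, K (inv G (lact G a u) ⋅ u).

Lemma next_ideal (G : SymGroup) K (HK : ideal G K) :
  (forall x, K x -> nextK G K x) -> ideal G (nextK G K).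
Proof.
  intro Hsub.
  assert (HM : forall x y, nextK G K x -> nextK G K y -> nextK G K (x ⋅ y)).
  { intros a b ha hb u. rewrite lact_mul.
    set (w := lact G b u).
    replace (inv G (lact G a w) ⋅ u) with ((inv G (lact G a w) ⋅ w) ⋅ (inv G w ⋅ u))
      by (rewrite <- mulA, mulKVg; reflexivity).
    apply (idM _ _ HK); [apply ha | apply hb]. }
  assert (HN : forall g x, nextK G K x -> nextK G K (g ⋅ x ⋅ inv G g)).
  { intros g a ha u. rewrite !lact_mul.
    rewrite <- (lactKV G g u) at 2. apply (resp _ _ HK), ha. }
  split.
  - intro u. rewrite lact_1u, mulVg. apply (id1 _ _ HK).
  - exact HM.
  - intros a ha u. apply (idVV _ _ HK).
    specialize (ha (lact G (inv G a) u)). rewrite lactKV in ha. exact ha.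
  - exact HN.
  - intros g a ha.
    set (x := g ⋅ a ⋅ inv G g). assert (hx : nextK G K x) by (apply HN, ha).
    set (c := lact G g a).
    assert (E : x ⊕ lact G x g = g ⊕ c).
    { unfold c. rewrite !badd_mul. unfold x. apply mulgKV. }
    apply key_eq in E.
    assert (h1 : K (bsub G g (lact G x g))).
    { apply (sub_char _ _ HK), hx. }
    rewrite <- E in h1. apply (sub_char _ _ HK), (idVV _ _ HK) in h1.
    rewrite <- (mulKVg G x c). apply HM; [exact hx | apply Hsub, h1].
Qed.

Lemma Kmono (G : SymGroup) (j : nat) : forall x, Kchain G j x -> Kchain G (S j) x.
Proof.
  induction j as [|j IH]; intros x hx.
  - simpl in hx. subst x. intro u. simpl. rewrite lact_1u, mulVg. reflexivity.
  - intro u. apply IH, hx.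
Qed.

Lemma K_ideal (G : SymGroup) (j : nat) : ideal G (Kchain G j).
Proof.
  induction j as [|j IH].
  - split; simpl; intros; subst.
    + reflexivity.
    + apply mul1g.
    + apply inv1.
    + rewrite mulg1, mulgV. reflexivity.
    + apply lact_a1.
  - apply (next_ideal G (Kchain G j) IH (Kmono G j)).
Qed.

Lemma addgen_ideal (G : SymGroup) K (HK : ideal G K) (P : G -> Prop) :
  (forall x, P x -> K x) -> forall x, addgen G P x -> K x.
Proof.
  intros HP x hx. induction hx.
  - apply HP; assumption.
  - apply (id1 _ _ HK).
  - unfold badd. apply (idM _ _ HK); [assumption | apply (idL _ _ HK); assumption].
  - unfold bopp. apply (idL _ _ HK), (idV _ _ HK); assumption.
Qed.

Lemma star_in (G : SymGroup) j (a b : G) :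
  Kchain G (S j) a -> Kchain G j (bstar G a b).
Proof.
  intro h. rewrite bstar_eq. apply (sub_char _ _ (K_ideal G j)).
  apply (idVV _ _ (K_ideal G j)), h.
Qed.

Lemma star_lift (G : SymGroup) j (a : G) :
  (forall b, Kchain G j (bstar G a b)) -> Kchain G (S j) a.
Proof.
  intros h u. specialize (h u). rewrite bstar_eq in h.
  apply (sub_char _ _ (K_ideal G j)) in h.
  apply (idVV _ _ (K_ideal G j)), h.
Qed.

Definition Fst (G : SymGroup) := fun A : G -> Prop => setstar G A (fullset G).

Lemma iter_S (G : SymGroup) s (A : G -> Prop) :
  Nat.iter (S s) (Fst G) A = setstar G (Nat.iter s (Fst G) A) (fullset G).
Proof. reflexivity. Qed.

Lemma part1 (G : SymGroup) (j s : nat) : s <= j ->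
  forall x, Nat.iter s (Fst G) (Kchain G j) x -> Kchain G (j - s) x.
Proof.
  induction s as [|s IH]; intros hs x hx.
  - rewrite Nat.sub_0_r. exact hx.
  - rewrite iter_S in hx. unfold setstar in hx.
    revert x hx. apply addgen_ideal; [apply K_ideal|].
    intros x [a [b [ha [_ ->]]]].
    apply star_in. replace (S (j - S s)) with (j - s) by lia.
    apply IH; [lia | exact ha].
Qed.

Lemma addgen_mono (G : SymGroup) (P Q : G -> Prop) :
  (forall x, P x -> Q x) -> forall x, addgen G P x -> addgen G Q x.
Proof.
  intros H x hx. induction hx.
  - apply addgen_in, H; assumption.
  - apply addgen_0.
  - apply addgen_add; assumption.
  - apply addgen_opp; assumption.
Qed.

Lemma iter_mono (G : SymGroup) s (A B : G -> Prop) :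
  (forall x, A x -> B x) -> forall x, Nat.iter s (Fst G) A x -> Nat.iter s (Fst G) B x.
Proof.
  intro H. induction s as [|s IH]; intros x hx.
  - exact (H x hx).
  - rewrite iter_S in *. revert x hx. apply addgen_mono.
    intros x [a [b [ha [hb ->]]]]. exists a, b. auto.
Qed.

Lemma lift_gen (G : SymGroup) i : forall l,
  (forall x, Nat.iter i (Fst G) (fullset G) x -> Kchain G l x) ->
  forall x, Kchain G (l + i) x.
Proof.
  induction i as [|i IH]; intros l H x.
  - rewrite Nat.add_0_r. apply H. exact I.
  - rewrite Nat.add_succ_r. apply (IH (S l)). intros y hy.
    apply star_lift. intro b. apply H. rewrite iter_S.
    apply addgen_in. exists y, b. repeat split; auto.
Qed.

Lemma Gder_iter (G : SymGroup) j : Gder G (S j) = Nat.iter j (Fst G) (fullset G).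
Proof.
  induction j as [|j IH].
  - reflexivity.
  - change (setstar G (Gder G (S j)) (fullset G) = Nat.iter (S j) (Fst G) (fullset G)).
    rewrite IH. reflexivity.
Qed.

Lemma RetEq_K (G : SymGroup) k : forall x y : G,
  RetEq G k x y <-> Kchain G k (inv G x ⋅ y).
Proof.
  induction k as [|k IH]; intros x y; simpl.
  - split; intro h.
    + subst. apply mulVg.
    + rewrite <- (mulKVg G x y), h, mulg1. reflexivity.
  - split; intro h.
    + intro u. specialize (h u). apply (proj1 (IH _ _)) in h.
      apply (resp _ _ (K_ideal G k)) with (g := inv G x) in h.
      rewrite lactK, <- lact_mul in h. apply (idVV _ _ (K_ideal G k)), h.
    + intro z. apply (proj2 (IH _ _)). specialize (h z).
      apply (resp _ _ (K_ideal G k)) with (g := x) in h.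
      rewrite <- lact_mul, mulKVg in h. apply (idVV _ _ (K_ideal G k)), h.
Qed.

Lemma RetTriv_P (G : SymGroup) k : RetTrivial G k <-> forall x, Kchain G k x.
Proof.
  unfold RetTrivial. split; intros h x.
  - specialize (h (one G) x). apply RetEq_K in h. rewrite inv1, mul1g in h. exact h.
  - intro y. apply RetEq_K, h.
Qed.

Lemma Kmono_le (G : SymGroup) i k : i <= k -> forall x, Kchain G i x -> Kchain G k x.
Proof.
  induction 1; intros x hx; auto. apply Kmono; auto.
Qed.

Lemma PQ (G : SymGroup) k : (forall x, Kchain G k x) -> forall x, Gder G (S k) x -> x = one G.
Proof.
  intros hP x hx. rewrite Gder_iter in hx.
  apply (iter_mono G k _ (Kchain G k)) in hx; [|intros; apply hP].
  apply part1 in hx; [|lia]. rewrite Nat.sub_diag in hx. exact hx.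
Qed.

Lemma QP (G : SymGroup) k : (forall x, Gder G (S k) x -> x = one G) -> forall x, Kchain G k x.
Proof.
  intros hQ x. apply (lift_gen G k 0). intros y hy. rewrite <- Gder_iter in hy.
  apply hQ, hy.
Qed.

Lemma stab (G : SymGroup) i : (forall x, Kchain G (S i) x -> Kchain G i x) ->
  forall n x, Kchain G (i + n) x -> Kchain G i x.
Proof.
  intro H.
  assert (H1 : forall n x, Kchain G (S (i + n)) x -> Kchain G (i + n) x).
  { induction n as [|n IH]; intros x hx.
    - rewrite Nat.add_0_r in *. auto.
    - rewrite Nat.add_succ_r in *. intro u. exact (IH _ (hx u)). }
  induction n as [|n IH]; intros x hx.
  - rewrite Nat.add_0_r in hx. exact hx.
  - apply IH, H1. rewrite <- Nat.add_succ_r. exact hx.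
Qed.

Lemma mpl_P (G : SymGroup) m : mpl_eq G m <->
  (forall x, Kchain G m x) /\ (forall k, k < m -> ~ forall x, Kchain G k x).
Proof.
  unfold mpl_eq. split; intros [h1 h2]; split.
  - apply RetTriv_P, h1.
  - intros k hk hP. apply (h2 k hk), RetTriv_P, hP.
  - apply RetTriv_P, h1.
  - intros k hk hP. apply (h2 k hk), RetTriv_P, hP.
Qed.

Theorem mainTheorem6 (G : SymGroup) (H2 : exists x y : G, x <> y) :
  (forall j s : nat, 1 <= s -> s <= j ->
     subset G (Nat.iter s (fun A => setstar G A (fullset G)) (Kchain G j))
              (Kchain G (j - s)))
  /\
  (forall m : nat, 1 <= m ->
     let a := mpl_eq G m in
     let b := (forall i, i < m ->
                 subset G (Kchain G i) (Kchain G (S i)) /\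
                 exists x, Kchain G (S i) x /\ ~ Kchain G i x)
              /\ (forall x, Kchain G m x) in
     let c := (forall j, j <= m -> subset G (Gder G (S j)) (Kchain G (m - j)))
              /\ (forall j, j <= m - 1 ->
                    ~ subset G (Gder G (S j)) (Kchain G (m - j - 1))) in
     let d := (forall x, Gder G (S m) x -> x = one G)
              /\ (exists x, Gder G m x /\ x <> one G) in
     (a <-> b) /\ (a <-> c) /\ (a <-> d)).
Proof.
  split.
  { intros j s _ hs x hx. apply (part1 G j s hs x hx). }
  intros m Hm. cbv zeta. rewrite mpl_P. unfold subset.
  assert (PP : forall i k, i <= k -> (forall x, Kchain G i x) -> forall x, Kchain G k x).
  { intros i k hik h x. apply (Kmono_le G i k hik), h. }
  split; [|split].
  - split.
    + intros [hm hk]. split; [|exact hm]. intros i hi. split; [apply Kmono|].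
      apply NNPP. intro hn. apply (hk i hi).
      assert (hs : forall x, Kchain G (S i) x -> Kchain G i x).
      { intros x hx. apply NNPP. intro hx'. apply hn. exists x. auto. }
      intro x. apply (stab G i hs (m - i)). replace (i + (m - i)) with m by lia. apply hm.
    + intros [hb hm]. split; [exact hm|]. intros k hk hP.
      destruct (hb k hk) as [_ [x [_ hx]]]. apply hx, hP.
  - split.
    + intros [hm hk]. split.
      * intros j hj x hx. rewrite Gder_iter in hx.
        apply (iter_mono G j _ (Kchain G m)) in hx; [|intros; apply hm].
        apply (part1 G m j hj x hx).
      * intros j hj hsub. apply (hk (m - 1)); [lia|].
        intro x. replace (m - 1) with (m - j - 1 + j) by lia.
        apply lift_gen. intros y hy. rewrite <- Gder_iter in hy. apply hsub, hy.
    + intros [hc1 hc2]. split.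
      * intro x. rewrite <- (Nat.sub_0_r m). apply hc1; [lia|]. exact I.
      * intros k hk hP. apply (hc2 (m - 1)); [lia|].
        replace (m - (m - 1) - 1) with 0 by lia.
        apply PQ. apply (PP k); [lia | exact hP].
  - split.
    + intros [hm hk]. split; [apply PQ, hm|].
      apply NNPP. intro hn. apply (hk (m - 1)); [lia|].
      apply QP. intros x hx. apply NNPP. intro hx'. apply hn. exists x.
      replace m with (S (m - 1)) by lia. auto.
    + intros [hq [x [hx hx1]]]. split; [apply QP, hq|].
      intros k hk hP. apply hx1.
      assert (hP' := PP k (m - 1) ltac:(lia) hP).
      apply (PQ G (m - 1) hP'). replace (S (m - 1)) with m by lia. exact hx.
Qed.
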